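(* Let $Y$ be the colimit of a sequence $Y_1\subset Y_2\subset\cdots$ of spaces. Assume that each $Y_n$ is paracompact and closed in $Y$, that each $Y_n\subset Y_{n+1}$ is a neighbourhood retract, and that each $Y_{n+1}\setminus Y_n$ is paracompact and Hausdorff. Then $Y$ is paracompact.
   Context: A space is called paracompact if every open cover admits a subordinate locally finite partition of unity. *)

(* Defs.v *)
From HB Require Import structures.
From mathcomp Require Import all_boot all_order all_algebra.
From mathcomp Require Import all_classical all_reals all_analysis.
Set Implicit Arguments. Unset Strict Implicit. Unset Printing Implicit Defensive.
Import Order.TTheory GRing.Theory Num.Theory numFieldNormedType.Exports.
Local Open Scope classical_set_scope.
Local Open Scope ring_scope.

Definition fsupport {R : realType} {T : topologicalType} (g : T -> R) : set T :=
  closure [set x | g x != 0].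

Definition lf_partition_of_unity_subordinate (R : realType) (T : topologicalType)
    (I : choiceType) (f : I -> T -> R) (J : Type) (U : J -> set T) : Prop :=
  [/\ (forall i, continuous (f i)),
      (forall i x, 0 <= f i x),
      (forall x : T, exists2 N : set T, nbhs x N &
          finite_set [set i | N `&` fsupport (f i) !=set0]),
      (forall x, \sum_(i \in [set: I]) f i x = 1) &
      (forall i, exists j, fsupport (f i) `<=` U j)].

Definition paracompact (R : realType) (T : topologicalType) : Prop :=
  forall (J : Type) (U : J -> set T),
    (forall j, open (U j)) -> \bigcup_j U j = setT ->
    exists (I : choiceType) (f : I -> T -> R),
      lf_partition_of_unity_subordinate f U.

Definition colimit_topology (Y : topologicalType) (Yn : nat -> set Y) : Prop :=
  forall U : set Y, (forall n, @open (subspace (Yn n)) (U `&` Yn n)) -> open U.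

Definition nbhd_retract (Y : topologicalType) (A B : set Y) : Prop :=
  exists V : set Y, [/\ A `<=` V, V `<=` B, @open (subspace B) V &
    exists r : Y -> Y, [/\ {within V, continuous r}, r @` V `<=` A &
      forall x, A x -> r x = x]].

(* Main.v *)
Require Import Defs.
From HB Require Import structures.
From Stdlib Require Import Eqdep_dec.
From mathcomp Require Import all_boot all_order all_algebra.
From mathcomp Require Import all_classical all_reals all_analysis.
From mathcomp Require Import finmap lra.
Local Open Scope classical_set_scope.

Module Aux.
Import Order.TTheory GRing.Theory Num.Theory numFieldNormedType.Exports.
Local Open Scope classical_set_scope.
Local Open Scope ring_scope.

Section Generic.
Context {R : realType}.

Lemma cvg_bigsum {T' : Type} (F : set_system T') {FF : Filter F} (I : Type)
  (s : seq I) (g : I -> T' -> R) (l : I -> R) :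
  (forall i, g i @ F --> l i) ->
  (fun z => \sum_(i <- s) g i z) @ F --> \sum_(i <- s) l i.
Proof.
move=> gl; elim: s => [|i s IH].
  have -> : (fun z => \sum_(i <- [::]) g i z) = (fun=> 0).
    by apply: funext => z; rewrite big_nil.
  by rewrite big_nil; exact: cvg_cst.
have -> : (fun z => \sum_(j <- i :: s) g j z) =
    (fun z => g i z + \sum_(j <- s) g j z).
  by apply: funext => z; rewrite big_cons.
by rewrite big_cons; apply: cvgD => //; exact: gl.
Qed.


Lemma fsum_lin (I : choiceType) (f g : I -> R) (a b : R) :
  finite_set [set i | f i != 0] -> finite_set [set i | g i != 0] ->
  \sum_(i \in [set: I]) (a * f i + b * g i) =
  a * \sum_(i \in [set: I]) f i + b * \sum_(i \in [set: I]) g i.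
Proof.
move=> ff fg.
have fU : finite_set ([set i | f i != 0] `|` [set i | g i != 0]).
  by rewrite finite_setU.
pose S := fset_set ([set i | f i != 0] `|` [set i | g i != 0]).
have out i : i \notin S -> f i = 0 /\ g i = 0.
  rewrite in_fset_set // => h; split; apply/eqP; apply: contraT => nz;
  move: h; rewrite mem_set //; [left|right]; exact: nz.
rewrite (fsbigTE S); last by move=> i /out [-> ->]; rewrite !mulr0 addr0.
rewrite (fsbigTE S f); last by move=> i /out [].
rewrite (fsbigTE S g); last by move=> i /out [].
by rewrite big_split /= !mulr_sumr.
Qed.

Context {T : topologicalType}.

Lemma lf_sum_cont (I : choiceType) (f : I -> T -> R) (P : set I) :
  (forall i, continuous (f i)) ->
  (forall x : T, exists2 N : set T, nbhs x N &
     finite_set [set i | N `&` fsupport (f i) !=set0]) ->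
  continuous (fun x => \sum_(i \in P) f i x).
Proof.
move=> fc lf x; have [N Nx Nfin] := lf x.
pose F : finmap.finset_of (Phant I) := fset_set [set i | N `&` fsupport (f i) !=set0].
have eqN z : N z -> \sum_(i \in P) f i z =
    \sum_(i <- finmap.enum_fset F) (if i \in P then f i z else 0).
  move=> Nz; rewrite fsbig_mkcond (fsbigTE F) //.
  move=> i iF; rewrite /patch; case: ifP => // _.
  apply/eqP; apply: contraNT iF => fi0.
  rewrite in_fset_set //; apply/mem_set; exists z; split => //.
  by rewrite /fsupport; apply: subset_closure.
rewrite /continuous_at eqN; last exact: nbhs_singleton.
have gc := @cvg_bigsum T (nbhs x) _ _ (finmap.enum_fset F)
  (fun i z => if i \in P then f i z else 0) (fun i => if i \in P then f i x else 0).
apply: cvg_trans; last first.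
  apply: gc => i; case: ifP => _; [exact: fc | exact: cvg_cst].
apply: near_eq_cvg; near=> z; rewrite eqN //; near: z; exact: Nx.
Unshelve. all: by end_near.
Qed.

End Generic.

Section Topo.
Context {R : realType} {Y : topologicalType}.

Definition spt (A : set Y) (g : Y -> R) := closure (A `&` [set y | g y != 0]).

Lemma open_closure_meet (M S : set Y) :
  open M -> M `&` closure S !=set0 -> M `&` S !=set0.
Proof.
move=> oM [z [Mz cz]]; have := cz M (open_nbhs_nbhs (conj oM Mz)).
by rewrite setIC.
Qed.

Lemma open_closure_disj (M S : set Y) :
  open M -> M `&` S = set0 -> M `&` closure S = set0.
Proof.
move=> oM MS; apply/eqP/negPn/negP => /set0P/(@open_closure_meet M S oM).
by rewrite MS => -[].
Qed.

Lemma spt0 (A : set Y) (g : Y -> R) : (forall y, A y -> g y = 0) ->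
  spt A g = set0.
Proof.
move=> g0; rewrite /spt (_ : A `&` _ = set0) ?closure0 //.
by apply/seteqP; split => // y [Ay]; rewrite /= g0 // eqxx.
Qed.

Lemma spt_subA (A : set Y) g : closed A -> spt A g `<=` A.
Proof.
move=> cA z; rewrite /spt => /(closureS (@subIsetl _ A [set y | g y != 0])).
by rewrite -(proj1 (closure_id A) cA).
Qed.

Lemma spt_fsupp (A : set Y) (g : Y -> R) : closed A ->
  spt A g `<=` @fsupport R (subspace A) g.
Proof.
move=> cA z sz; have zA : A z := spt_subA A g cA z sz.
have := @closure_subspaceW _ A (A `&` [set y | g y != 0]) (@subIsetl _ _ _).
move=> E.
have : closure (A `&` [set y | g y != 0] : set (subspace A)) z.
  by rewrite E; split.
by apply: (@closureS (subspace A)); exact: subIsetr.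
Qed.

Lemma spt_le (A B : set Y) (g h : Y -> R) :
  A `<=` B -> (forall y, A y -> g y != 0 -> h y != 0) -> spt A g `<=` spt B h.
Proof.
move=> AB gh; apply: closureS => y [Ay gy]; split; [exact: AB | exact: gh].
Qed.

Lemma within_ex (A : set Y) (y : Y) (P : Y -> Prop) :
  (\forall z \near within A (nbhs y), P z) ->
  exists M : set Y, [/\ open M, M y & forall z, M z -> A z -> P z].
Proof.
move=> /nbhs_interior H; exists (interior (fun z => A z -> P z)); split.
- exact: open_interior.
- exact: nbhs_singleton.
- by move=> z /interior_subset.
Qed.

Lemma open_sub_crit (A S : set Y) :
  (forall y, A y -> S y -> \forall z \near within A (nbhs y), S z) ->
  open (S : set (subspace A)).
Proof.
move=> H; rewrite openE => y Sy; rewrite /interior.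
case: (nbhs_subspaceP A y) => Ay.
  exact: H.
by move=> z ->.
Qed.

Lemma within_finer (B V : set Y) (y : Y) (P : Y -> Prop) :
  open (V : set (subspace B)) -> V y -> B y ->
  (\forall z \near within V (nbhs y), P z) ->
  \forall z \near within B (nbhs y), P z.
Proof.
move=> oV Vy By HP.
have HV : within B (nbhs y) V.
  rewrite (nbhs_subspace_in By).
  have h : open_nbhs (y : subspace B) V by split.
  have h2 := @open_nbhs_nbhs (subspace B) y V h.
  exact: h2.
have h1 : nbhs y (fun z => B z -> V z) := HV.
have h2 : nbhs y (fun z => V z -> P z) := HP.
change (nbhs y (fun z => B z -> P z)).
exact: (filterS2 _ (fun z (a : B z -> V z) (b : V z -> P z) (c : B z) => b (a c)) h1 h2).
Qed.

Lemma within_cont (A : set Y) (g : Y -> R) y :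
  {within A, continuous g} -> A y -> g @ within A (nbhs y) --> g y.
Proof. by move=> /subspace_continuousP H Ay; exact: H. Qed.


Lemma ev_lt (B : set Y) (g : Y -> R) y c : {within B, continuous g} -> B y ->
  g y < c -> \forall z \near within B (nbhs y), g z < c.
Proof.
move=> gc By gyc; have H := within_cont B g y gc By.
have : nbhs (g y) [set t | t < c].
  by apply: open_nbhs_nbhs; split => //; exact: open_lt.
by move=> /H.
Qed.

Lemma ev_gt (B : set Y) (g : Y -> R) y c : {within B, continuous g} -> B y ->
  c < g y -> \forall z \near within B (nbhs y), c < g z.
Proof.
move=> gc By gyc; have H := within_cont B g y gc By.
have : nbhs (g y) [set t | c < t].
  by apply: open_nbhs_nbhs; split => //; exact: open_gt.
by move=> /H.
Qed.

Lemma ev_map (B V : set Y) (r : Y -> Y) v (S : set Y) :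
  open (V : set (subspace B)) -> V v -> B v -> {within V, continuous r} ->
  nbhs (r v) S -> \forall z \near within B (nbhs v), S (r z).
Proof.
move=> oV Vv Bv rc Sv; apply: (within_finer _ _ _ _ oV Vv Bv).
exact: ((subspace_continuousP _ _).1 rc v Vv).
Qed.

End Topo.

Section Main.
Context {R : realType} {Y : topologicalType} (Yn : nat -> set Y).
Context (Hclosed : forall n, closed (Yn n)).
Context (J : Type) (U : J -> set Y) (Uo : forall j, open (U j)).
Context (Ik : nat -> choiceType) (chi : forall k, Ik k -> Y -> R)
  (jchi : forall k, Ik k -> J).
Context (Hchi : forall k,
  @lf_partition_of_unity_subordinate R (subspace (Yn k)) (Ik k) (chi k) J U).
Context (Hj : forall k i,
  @fsupport R (subspace (Yn k)) (chi k i) `<=` U (jchi k i)).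

Definition X : choiceType := {k : nat & Ik k}.
Definition jx (x : X) := jchi (projT1 x) (projT2 x).
Definition newf (p : nat) (x : X) (y : Y) : R :=
  if projT1 x == p then chi (projT1 x) (projT2 x) y else 0.

Lemma newfE p (i : Ik p) : newf p (existT _ p i) = chi p i.
Proof. by apply: funext => w; rewrite /newf /= eqxx. Qed.

Lemma newf0 p (x : X) : projT1 x != p -> newf p x = fun=> 0.
Proof. by move=> h; apply: funext => w; rewrite /newf (negbTE h). Qed.

Lemma newf_ge0 p x y : 0 <= newf p x y.
Proof.
rewrite /newf; case: eqP => // _; have [_ h _ _ _] := Hchi (projT1 x); exact: h.
Qed.

Lemma newf_cont p x : {within Yn p, continuous newf p x}.
Proof.
case: x => k i; case: (eqVneq k p) => [e|kp].
  subst k; rewrite newfE; have [h _ _ _ _] := Hchi p; exact: h.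
rewrite newf0 //; exact: cst_continuous.
Qed.

Lemma newf_spt p x : spt (Yn p) (newf p x) `<=` U (jx x).
Proof.
case: x => k i; case: (eqVneq k p) => [e|kp].
  subst k; rewrite newfE => z /(spt_fsupp _ _ (Hclosed p)); exact: Hj.
by rewrite newf0 // spt0.
Qed.

Lemma newf_lf p y : Yn p y -> exists M : set Y,
  [/\ open M, M y & finite_set [set x | M `&` spt (Yn p) (newf p x) !=set0]].
Proof.
move=> Ay; have [_ _ lf _ _] := Hchi p; have [N Ny Nfin] := lf y.
have [V Vy NV] := (@nbhs_subspace_ex Y (Yn p) N y Ay).1 Ny.
exists (interior V); split; [exact: open_interior | exact: nbhs_singleton (nbhs_interior Vy) |].
apply: sub_finite_set (finite_image (fun i => existT _ p i : X) Nfin).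
move=> [k i] /= [z [Vz sz]].
case: (eqVneq k p) => [e|kp]; last first.
  by move: sz; rewrite newf0 // spt0.
subst k; exists i => //; exists z; split.
  have zA : Yn p z := spt_subA _ _ (Hclosed p) z sz.
  have : (V `&` Yn p) z by split => //; exact: interior_subset.
  by rewrite -NV => -[].
by move: sz; rewrite newfE => /(spt_fsupp _ _ (Hclosed p)).
Qed.

Lemma newf_sum p y : \sum_(x \in [set: X]) newf p x y = 1.
Proof.
rewrite -(fsbig_widen (range (fun i => existT _ p i : X))) //; last first.
  move=> [k i] [_ /= nr]; case: (eqVneq k p) => [e|kp].
    by subst k; exfalso; apply: nr; exists i.
  by rewrite /= newf0.
rewrite fsbig_image; last first.
  move=> a b _ _ e; exact: (inj_pair2_eq_dec _ (fun x y => decP (x =P y)) _ _ _ _ e).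
under eq_fsbigr do rewrite newfE.
by have [_ _ _ h _] := Hchi p; exact: h.
Qed.


Record Good (p : nat) (Phi : X -> Y -> R) : Prop := {
  g_cont : forall x, {within Yn p, continuous Phi x};
  g_ge0 : forall x y, 0 <= Phi x y;
  g_zero : forall x y, Yn p y -> (p < projT1 x)%N -> Phi x y = 0;
  g_lf : forall y, Yn p y -> exists M : set Y,
    [/\ open M, M y & finite_set [set x | M `&` spt (Yn p) (Phi x) !=set0]];
  g_sum : forall y, Yn p y -> \sum_(x \in [set: X]) Phi x y = 1;
  g_spt : forall x, spt (Yn p) (Phi x) `<=` U (jx x) }.

Record Rel (p : nat) (Phi Phi' : X -> Y -> R) : Prop := {
  r_eq : forall x y, Yn p y -> Phi' x y = Phi x y;
  r_spt : forall x, spt (Yn p.+1) (Phi' x) `&` Yn p `<=` spt (Yn p) (Phi x);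
  r_nbhd : forall M : set Y, open M -> exists M' : set Y,
    [/\ open M', M' `&` Yn p = M `&` Yn p &
      forall x, M `&` spt (Yn p) (Phi x) = set0 ->
                M' `&` spt (Yn p.+1) (Phi' x) = set0] }.

Arguments g_cont {p Phi}. Arguments g_ge0 {p Phi}. Arguments g_zero {p Phi}.
Arguments g_lf {p Phi}. Arguments g_sum {p Phi}. Arguments g_spt {p Phi}.
Arguments r_eq {p Phi Phi'}. Arguments r_spt {p Phi Phi'}.
Arguments r_nbhd {p Phi Phi'}.

Lemma good0 : Good 0 (newf 0).
Proof.
split.
- exact: newf_cont.
- exact: newf_ge0.
- by move=> x y _ h; rewrite newf0 // -lt0n.
- exact: newf_lf.
- by move=> y _; exact: newf_sum.
- exact: newf_spt.
Qed.

Section Assemble.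
Context (Hincr : forall n, Yn n `<=` Yn n.+1)
  (Hcover : \bigcup_n Yn n = setT) (Hcolim : colimit_topology Yn).
Context (Phi : nat -> X -> Y -> R) (HG : forall p, Good p (Phi p))
  (HR : forall p, Rel p (Phi p) (Phi p.+1)).

Lemma incr_add p d : Yn p `<=` Yn (p + d).
Proof.
elim: d => [|d IH]; first by rewrite addn0.
by move=> z /IH; rewrite addnS; exact: Hincr.
Qed.

Lemma incr_le p q : (p <= q)%N -> Yn p `<=` Yn q.
Proof. by move=> pq; rewrite -(subnKC pq); exact: incr_add. Qed.

Lemma cons_add p d x y : Yn p y -> Phi (p + d) x y = Phi p x y.
Proof.
move=> yp; elim: d => [|d IH]; first by rewrite addn0.
rewrite addnS (r_eq (HR (p + d))) //; exact: incr_add.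
Qed.

Lemma cons_le p q x y : (p <= q)%N -> Yn p y -> Phi q x y = Phi p x y.
Proof. by move=> pq yp; rewrite -(subnKC pq); exact: cons_add. Qed.

Lemma spt_mono p q x : (p <= q)%N ->
  spt (Yn p) (Phi p x) `<=` spt (Yn q) (Phi q x).
Proof.
move=> pq; apply: spt_le; first exact: incr_le.
by move=> y yp; rewrite (cons_le _ _ x y pq yp).
Qed.

Lemma spt_down q d x :
  spt (Yn (q + d)) (Phi (q + d) x) `&` Yn q `<=` spt (Yn q) (Phi q x).
Proof.
elim: d => [|d IH]; first by rewrite addn0 => z [].
rewrite addnS => z [sz zq]; apply: IH; split => //.
apply: (r_spt (HR (q + d))); split => //; exact: incr_add.
Qed.

Definition Tx x := \bigcup_p spt (Yn p) (Phi p x).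

Lemma Tx_cap x q z : Tx x z -> Yn q z -> spt (Yn q) (Phi q x) z.
Proof.
move=> [p _ sz] zq; case: (leqP p q) => pq.
  exact: (spt_mono _ _ x pq z sz).
apply: (spt_down q (p - q) x z); split => //.
by rewrite subnKC // ltnW.
Qed.

Lemma Tx_closed x : closed (Tx x).
Proof.
rewrite -openC; apply: Hcolim => n.
have -> : ~` Tx x `&` Yn n = ~` spt (Yn n) (Phi n x) `&` Yn n.
  apply/seteqP; split => z [h zn]; split => //.
    by move=> s; apply: h; exists n.
  by move=> t; apply: h; exact: Tx_cap.
apply: openI; last exact: open_subspaceT.
by apply: open_subspaceW; rewrite openC; exact: closed_closure.
Qed.


Lemma assemble : exists (I : choiceType) (f : I -> Y -> R),
  lf_partition_of_unity_subordinate f U.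
Proof.
have mY y : {m | Yn m y}.
  apply: cid; have : (\bigcup_n Yn n) y by rewrite Hcover.
  by case=> n _ h; exists n.
pose m y := projT1 (mY y).
have my y : Yn (m y) y := projT2 (mY y).
pose F (x : X) (y : Y) := Phi (m y) x y.
have F_eq q x y : Yn q y -> F x y = Phi q x y.
  move=> yq; rewrite /F; case: (leqP (m y) q) => h.
    by rewrite (cons_le _ _ x y h (my y)).
  by rewrite (cons_le _ _ x y (ltnW h) yq).
have suppF x : fsupport (F x) `<=` Tx x.
  move=> z cz; rewrite (proj1 (closure_id _) (Tx_closed x)).
  apply: closureS cz => y /= Fy; exists (m y) => //.
  by apply: subset_closure; split.
exists X, F; split.
- move=> x; apply/continuousP => B oB; apply: Hcolim => n.
  have -> : F x @^-1` B `&` Yn n = Phi n x @^-1` B `&` Yn n.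
    by apply/seteqP; split => z [h zn]; split => //; move: h;
      rewrite /preimage /= (F_eq n).
  apply: openI; last exact: open_subspaceT.
  exact: (proj1 (@continuousP (subspace (Yn n)) _ (Phi n x)) (g_cont (HG n) x) B oB).
- by move=> x y; exact: g_ge0 (HG _) x y.
- move=> y.
  have [M0 [oM0 M0y finM0]] := g_lf (HG (m y)) y (my y).
  set m0 := m y in M0 oM0 M0y finM0 *.
  have H1 (pM : nat * set Y) : exists M' : set Y, open pM.2 ->
     [/\ open M', M' `&` Yn pM.1 = pM.2 `&` Yn pM.1 &
      forall x, pM.2 `&` spt (Yn pM.1) (Phi pM.1 x) = set0 ->
                M' `&` spt (Yn pM.1.+1) (Phi pM.1.+1 x) = set0].
    case: pM => p M /=; case: (pselect (open M)) => oM.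
      by have [M' h] := r_nbhd (HR p) M oM; exists M'.
    by exists M.
  have [G0 HG0] := choice H1.
  pose G p M := G0 (p, M).
  have HG' p M : open M -> [/\ open (G p M), G p M `&` Yn p = M `&` Yn p &
      forall x, M `&` spt (Yn p) (Phi p x) = set0 ->
                G p M `&` spt (Yn p.+1) (Phi p.+1 x) = set0].
    exact: (HG0 (p, M)).
  pose Ms := fix Ms d := if d is d'.+1 then G (m0 + d')%N (Ms d') else M0.
  have MsS d : Ms d.+1 = G (m0 + d)%N (Ms d) by [].
  have oMs d : open (Ms d).
    elim: d => [|d IH] //; rewrite MsS; by have [] := HG' (m0 + d)%N _ IH.
  have Ms_eq d : Ms d.+1 `&` Yn (m0 + d) = Ms d `&` Yn (m0 + d).
    by rewrite MsS; have [] := HG' (m0 + d)%N _ (oMs d).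
  have Ms_stable e d : Ms (e + d)%N `&` Yn (m0 + e) = Ms e `&` Yn (m0 + e).
    elim: d => [|d IH]; first by rewrite addn0.
    have sub : Yn (m0 + e) `<=` Yn (m0 + (e + d)) by rewrite addnA; exact: incr_add.
    apply/seteqP; split => z [h1 h2].
    + have : (Ms (e + d).+1 `&` Yn (m0 + (e + d))) z.
        by split => //; [rewrite -addnS | exact: sub].
      rewrite Ms_eq => -[h3 _].
      have : (Ms (e + d) `&` Yn (m0 + e)) z by [].
      by rewrite IH.
    + have : (Ms e `&` Yn (m0 + e)) z by [].
      rewrite -IH => -[h3 _].
      have : (Ms (e + d) `&` Yn (m0 + (e + d))) z by split => //; exact: sub.
      by rewrite -Ms_eq addnS => -[].
  have Ms_disj d x : M0 `&` spt (Yn m0) (Phi m0 x) = set0 ->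
      Ms d `&` spt (Yn (m0 + d)) (Phi (m0 + d)%N x) = set0.
    move=> h; elim: d => [|d IH]; first by rewrite addn0.
    rewrite MsS addnS; have [_ _ h3] := HG' (m0 + d)%N _ (oMs d); exact: h3.
  pose N := \bigcup_d (Ms d `&` Yn (m0 + d)).
  exists N.
    apply: open_nbhs_nbhs; split; last by exists 0%N => //; rewrite addn0; split => //; exact: my.
    apply: Hcolim => n; pose d0 := (n - m0)%N.
    have nd0 : Yn n `<=` Yn (m0 + d0).
      by apply: incr_le; rewrite -maxnE leq_maxr.
    have -> : N `&` Yn n = Ms d0 `&` Yn n.
      apply/seteqP; split.
      + move=> z [[d _ [zd zmd]] zn]; split => //; case: (leqP d d0) => h.
          have := Ms_stable d (d0 - d)%N; rewrite subnKC // => E.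
          have : (Ms d0 `&` Yn (m0 + d)) z by rewrite E.
          by case.
        have := Ms_stable d0 (d - d0)%N; rewrite subnKC ?(ltnW h) // => E.
        have : (Ms d0 `&` Yn (m0 + d0)) z by rewrite -E; split => //; exact: nd0.
        by case.
      + by move=> z [zd0 zn]; split => //; exists d0 => //; split => //; exact: nd0.
    apply: openI; last exact: open_subspaceT.
    by apply: open_subspaceW; exact: oMs.
  apply: sub_finite_set finM0 => x /= [z [Nz fz]].
  apply: contrapT => h.
  have h' : M0 `&` spt (Yn m0) (Phi m0 x) = set0.
    by apply/seteqP; split => // w hw; apply: h; exists w.
  have [d _ [zd zmd]] := Nz.
  have : (Ms d `&` spt (Yn (m0 + d)) (Phi (m0 + d)%N x)) z.
    by split => //; exact: Tx_cap (suppF x z fz) zmd.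
  by rewrite Ms_disj.
- by move=> y; exact: g_sum (HG (m y)) y (my y).
- move=> x; exists (jx x) => z /suppF [p _ sz]; exact: g_spt (HG p) x z sz.
Qed.

End Assemble.

Section Step.
Context (p : nat) (Phi : X -> Y -> R) (HPhi : Good p Phi).
Context (V : set Y) (r : Y -> Y) (AV : Yn p `<=` V) (VB : V `<=` Yn p.+1)
  (oV : open (V : set (subspace (Yn p.+1))))
  (rc : {within V, continuous r}) (rV : r @` V `<=` Yn p)
  (rid : forall x, Yn p x -> r x = x).

Definition O := [set v | V v /\ forall x, spt (Yn p) (Phi x) (r v) -> U (jx x) v].

Lemma rA v : V v -> Yn p (r v).
Proof. by move=> Vv; apply: rV; exists v. Qed.

Lemma O1 : Yn p `<=` O.
Proof.
move=> a Aa; split; first exact: AV.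
by move=> x; rewrite rid //; exact: (g_spt HPhi x a).
Qed.

Lemma O2 : open (O : set (subspace (Yn p.+1))).
Proof.
apply: open_sub_crit => v Bv [Vv Hv].
have Aa := rA v Vv.
have [M [oM Ma finM]] := g_lf HPhi (r v) Aa.
pose Fin := fset_set [set x | M `&` spt (Yn p) (Phi x) !=set0].
have E1 : \forall z \near within (Yn p.+1) (nbhs v), V z.
  by apply: (within_finer _ _ _ _ oV Vv Bv); exact: withinT.
have E2 : \forall z \near within (Yn p.+1) (nbhs v), M (r z).
  by apply: (ev_map _ _ _ _ _ oV Vv Bv rc); apply: open_nbhs_nbhs.
have E3 : \forall z \near within (Yn p.+1) (nbhs v),
    (\bigcap_(x in [set` Fin]) [set z | spt (Yn p) (Phi x) (r z) -> U (jx x) z]) z.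
  apply: filter_bigI => x _.
  case: (pselect (spt (Yn p) (Phi x) (r v))) => sx.
    have Uv := Hv x sx.
    have : nbhs v (U (jx x)) by apply: open_nbhs_nbhs; split => //; exact: Uo.
    rewrite /within => nU; apply: filterS nU => z Uz _ _; exact: Uz.
  have : nbhs (r v) (~` spt (Yn p) (Phi x)).
    by apply: open_nbhs_nbhs; split => //; rewrite openC; exact: closed_closure.
  move=> /(ev_map _ _ _ _ _ oV Vv Bv rc); apply: filterS => z nz /nz [].
near=> z; split; first by near: z.
move=> x sx; have := near E3 z; apply => //.
rewrite /= in_fset_set; last exact: finM.
apply/mem_set; exists (r z); split => //; by near: z.
Unshelve. all: by end_near.
Qed.

Section Sig.
Context (sig : Y -> R) (sc : {within Yn p.+1, continuous sig})
  (s0 : forall y, Yn p y -> sig y = 0) (sO : forall y, ~ O y -> sig y = 1).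

Definition lam y : R := Num.min 1 (Num.max 0 (2 - 3 * sig y)).

Lemma lam_ge0 y : 0 <= lam y.
Proof. rewrite /lam !minEle !maxEle; case: ifP; case: ifP => ? ?; lra. Qed.

Lemma lam_le1 y : lam y <= 1.
Proof. rewrite /lam !minEle !maxEle; case: ifP; case: ifP => ? ?; lra. Qed.

Lemma lam1 y : 3 * sig y < 1 -> lam y = 1.
Proof. rewrite /lam !minEle !maxEle => h; case: ifP; case: ifP => ? ?; lra. Qed.

Lemma lam0 y : 2 < 3 * sig y -> lam y = 0.
Proof. rewrite /lam !minEle !maxEle => h; case: ifP; case: ifP => ? ?; lra. Qed.

Lemma lamO y : lam y != 0 -> O y.
Proof.
move=> h; apply: contrapT => nO; move: h; rewrite lam0 ?eqxx // sO //; lra.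
Qed.

Lemma lam_cont : {within Yn p.+1, continuous lam}.
Proof.
move=> y.
apply: (@continuous_min R (subspace (Yn p.+1)) (fun=> 1) (fun z => Num.max 0 (2 - 3 * sig z))).
  exact: cst_continuous.
apply: (@continuous_max R (subspace (Yn p.+1)) (fun=> 0) (fun z => 2 - 3 * sig z)).
  exact: cst_continuous.
apply: cvgB; first exact: cvg_cst.
apply: cvgM; first exact: cvg_cst.
exact: sc.
Qed.

Lemma ev_lam0 y : Yn p.+1 y -> ~ V y ->
  \forall z \near within (Yn p.+1) (nbhs y), lam z = 0.
Proof.
move=> By nV; have s1 : sig y = 1 by apply: sO => -[].
have : (3%:R^-1 * 2%:R : R) < sig y by rewrite s1; lra.
move=> /(ev_gt _ _ _ _ sc By); apply: filterS => z hz; apply: lam0.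
lra.
Qed.

Definition Phi' x y := lam y * Phi x (r y) + (1 - lam y) * newf p.+1 x y.

Lemma t1_nz x y : lam y * Phi x (r y) != 0 ->
  [/\ V y, Yn p (r y), Phi x (r y) != 0 & lam y != 0].
Proof.
rewrite mulf_eq0 negb_or => /andP [l0 p0].
have [Vy _] := lamO y l0; split => //; exact: rA.
Qed.

Lemma evV y : V y -> Yn p.+1 y -> \forall z \near within (Yn p.+1) (nbhs y), V z.
Proof. by move=> Vy By; apply: (within_finer _ _ _ _ oV Vy By); exact: withinT. Qed.

Lemma t1_cvg x y : Yn p.+1 y ->
  (fun z => lam z * Phi x (r z)) @ within (Yn p.+1) (nbhs y) -->
  lam y * Phi x (r y).
Proof.
move=> By; case: (pselect (V y)) => Vy.
  apply: cvgM; first exact: (within_cont _ _ _ lam_cont By).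
  have hr : r @ within (Yn p.+1) (nbhs y) --> within (Yn p) (nbhs (r y)).
    move=> S hS.
    have e1 := ev_map _ _ _ _ _ oV Vy By rc hS.
    have e2 := evV y Vy By.
    have e3 : \forall z \near within (Yn p.+1) (nbhs y), S (r z).
      exact: (filterS2 _ (fun z (h1 : Yn p (r z) -> S (r z)) h2 => h1 (rA z h2)) e1 e2).
    exact: e3.
  exact: (cvg_comp _ _ hr (within_cont _ _ _ (g_cont HPhi x) (rA y Vy))).
have ly : lam y = 0 by apply: lam0; rewrite sO; [lra | move=> -[]].
rewrite ly mul0r; apply: cvg_near_cst.
by apply: filterS (ev_lam0 y By Vy) => z ->; rewrite mul0r.
Unshelve. all: by end_near.
Qed.

Lemma Phi'_cont x : {within Yn p.+1, continuous Phi' x}.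
Proof.
apply/subspace_continuousP => y By.
apply: cvgD; first exact: t1_cvg.
apply: cvgM; last exact: (within_cont _ _ _ (newf_cont p.+1 x) By).
apply: cvgB; first exact: cvg_cst.
exact: (within_cont _ _ _ lam_cont By).
Qed.

Lemma Phi'_ge0 x y : 0 <= Phi' x y.
Proof.
apply: addr_ge0; apply: mulr_ge0; rewrite ?lam_ge0 ?newf_ge0 //.
  exact: (g_ge0 HPhi).
by rewrite subr_ge0 lam_le1.
Qed.

Lemma Phi'_zero x y : Yn p.+1 y -> (p.+1 < projT1 x)%N -> Phi' x y = 0.
Proof.
move=> By h; rewrite /Phi' newf0 /=; last by rewrite gtn_eqF.
case: (eqVneq (lam y * Phi x (r y)) 0) => [->|/t1_nz [Vy Ar _ _]].
  by rewrite mulr0 addr0.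
by rewrite (g_zero HPhi x (r y) Ar) ?mulr0 ?addr0 // ltnW.
Qed.

Lemma spt_Phi' x : spt (Yn p.+1) (Phi' x) `<=`
  spt (Yn p.+1) (fun y => lam y * Phi x (r y)) `|` spt (Yn p.+1) (newf p.+1 x).
Proof.
rewrite /spt -closureU; apply: closureS => y [By]; rewrite /= /Phi' => nz.
case: (eqVneq (lam y * Phi x (r y)) 0) => h; last by left.
right; split => //; move: nz; rewrite h add0r.
by apply: contraNneq => ->; rewrite mulr0.
Qed.

Lemma Phi'_lf y : Yn p.+1 y -> exists M : set Y,
  [/\ open M, M y & finite_set [set x | M `&` spt (Yn p.+1) (Phi' x) !=set0]].
Proof.
move=> By.
have [M2 [oM2 M2y fin2]] := newf_lf (p.+1) y By.
have [M1 [oM1 M1y fin1]] : exists M1 : set Y, [/\ open M1, M1 y &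
    finite_set [set x | M1 `&` spt (Yn p.+1) (fun z => lam z * Phi x (r z)) !=set0]].
  case: (pselect (V y)) => Vy.
    have Ar := rA y Vy.
    have [Ma [oMa May fina]] := g_lf HPhi (r y) Ar.
    have oS : open ([set w | V w /\ Ma (r w)] : set (subspace (Yn p.+1))).
      apply: open_sub_crit => w Bw [Vw Maw].
      have e1 := evV w Vw Bw.
      have e2 := ev_map _ _ _ _ _ oV Vw Bw rc (open_nbhs_nbhs (conj oMa Maw)).
      near=> z; split; near: z; [exact: e1 | exact: e2].
    have [W oW WS] := (@open_subspaceP Y (Yn p.+1) [set w | V w /\ Ma (r w)]).1 oS.
    exists W; split => //.
      have : ([set w | V w /\ Ma (r w)] `&` Yn p.+1) y by split.
      by rewrite -WS => -[].
    apply: sub_finite_set fina => x /= hx.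
    have [w [Ww [Bw nz]]] := open_closure_meet _ _ oW hx.
    have : (W `&` Yn p.+1) w by [].
    rewrite WS => -[[Vw Maw] _].
    have [_ Arw pnz _] := t1_nz _ _ nz.
    by exists (r w); split => //; apply: subset_closure; split.
  have [M1 [oM1 M1y H]] := within_ex _ _ _ (ev_lam0 y By Vy).
  exists M1; split => //; apply: sub_finite_set (finite_set0 X) => x /= hx.
  have [w [Ww [Bw nz]]] := open_closure_meet _ _ oM1 hx.
  by move: nz; rewrite /= (H w Ww Bw) mul0r eqxx.
exists (M1 `&` M2); split; [exact: openI | by split |].
have : finite_set ([set x | M1 `&` spt (Yn p.+1) (fun z => lam z * Phi x (r z)) !=set0]
  `|` [set x | M2 `&` spt (Yn p.+1) (newf p.+1 x) !=set0]) by rewrite finite_setU.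
apply: sub_finite_set => x /= [z [[M1z M2z] /spt_Phi' [] sz]].
  by left; exists z.
by right; exists z.
Unshelve. all: by end_near.
Qed.

Lemma Phi'_sum y : Yn p.+1 y -> \sum_(x \in [set: X]) Phi' x y = 1.
Proof.
move=> By; case: (eqVneq (lam y) 0) => l0.
  rewrite (eq_fsbigr (fun x => newf p.+1 x y)); first exact: newf_sum.
  by move=> x _; rewrite /Phi' l0 mul0r add0r subr0 mul1r.
have [Vy _] := lamO y l0; have Ar := rA y Vy.
rewrite /Phi' (fsum_lin X (fun x => Phi x (r y)) (fun x => newf p.+1 x y)).
- rewrite (g_sum HPhi _ Ar) newf_sum; lra.
- have [M [oM My finM]] := g_lf HPhi (r y) Ar.
  apply: sub_finite_set finM => x /= nz; exists (r y); split => //.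
  by apply: subset_closure; split.
- have [M [oM My finM]] := newf_lf (p.+1) y By.
  apply: sub_finite_set finM => x /= nz; exists y; split => //.
  by apply: subset_closure; split.
Qed.

Definition thr : R := 3%:R^-1 * 2%:R.

Lemma open_gt_thr : open ([set w | thr < sig w] : set (subspace (Yn p.+1))).
Proof. apply: open_sub_crit => w Bw hw; exact: ev_gt _ _ _ _ sc Bw hw. Qed.

Lemma closed_C : closed (Yn p.+1 `&` [set w | sig w <= thr]).
Proof.
have : closed ([set w | sig w <= thr] : set (subspace (Yn p.+1))).
  rewrite -openC.
  have -> : ~` [set w | sig w <= thr] = [set w | thr < sig w].
    by apply/seteqP; split => w /=; rewrite ltNge => /negP.
  exact: open_gt_thr.
move=> /(@closed_subspaceP Y (Yn p.+1)) [C cC CE].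
by rewrite setIC -CE; apply: closedI => //; exact: Hclosed.
Qed.

Lemma Phi'_spt x : spt (Yn p.+1) (Phi' x) `<=` U (jx x).
Proof.
move=> z /spt_Phi' []; last exact: newf_spt.
move=> sz.
have sub : Yn p.+1 `&` [set w | lam w * Phi x (r w) != 0] `<=`
    Yn p.+1 `&` [set w | sig w <= thr].
  move=> w [Bw nz]; split => //; have [_ _ _ l0] := t1_nz _ _ nz.
  rewrite /= /thr; apply: contraT; rewrite -ltNge => h.
  by move: l0; rewrite lam0 ?eqxx //; lra.
have zC : (Yn p.+1 `&` [set w | sig w <= thr]) z.
  rewrite (proj1 (closure_id _) closed_C); exact: closureS sub _ sz.
have Oz : O z.
  apply: contrapT => nO; case: zC => _; rewrite /= sO // /thr; lra.
case: Oz => Vz HU; apply: HU.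
have Bz := VB z Vz.
move=> N nN.
have e := ev_map _ _ _ _ _ oV Vz Bz rc nN.
have e1 := evV z Vz Bz.
have [W [oW Wz HW]] := within_ex _ _ _ (filterS2 _ (fun w (a : V w) (b : N (r w)) => conj a b) e1 e).
have [w [Ww [Bw nz]]] := open_closure_meet _ _ oW (ex_intro _ z (conj Wz sz)).
have [Vw Nw] := HW w Ww Bw.
have [_ Arw pnz _] := t1_nz _ _ nz.
by exists (r w); split.
Qed.

Lemma Phi'_eq x y : Yn p y -> Phi' x y = Phi x y.
Proof.
move=> Ay; have l1 : lam y = 1 by apply: lam1; rewrite s0 //; lra.
by rewrite /Phi' l1 rid // mul1r subrr mul0r addr0.
Qed.

Lemma Phi'_sptA x : spt (Yn p.+1) (Phi' x) `&` Yn p `<=` spt (Yn p) (Phi x).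
Proof.
move=> a [sa Aa] N nN.
have Va := AV a Aa; have Ba := VB a Va.
have e1 := evV a Va Ba.
have e2 : \forall w \near within (Yn p.+1) (nbhs a), N (r w).
  by apply: (ev_map _ _ _ _ _ oV Va Ba rc); rewrite rid.
have e3 : \forall w \near within (Yn p.+1) (nbhs a), sig w < 3%:R^-1.
  by apply: (ev_lt _ _ _ _ sc Ba); rewrite s0 //; lra.
have e123 : \forall w \near within (Yn p.+1) (nbhs a),
    (V w /\ N (r w)) /\ sig w < 3%:R^-1.
  near=> w; split; [split|]; near: w; [exact: e1 | exact: e2 | exact: e3].
have [W [oW Wa HW]] := within_ex _ _ _ e123.
have [w [Ww [Bw nz]]] := open_closure_meet _ _ oW (ex_intro _ a (conj Wa sa)).
have [[Vw Nw] sw] := HW w Ww Bw.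
move: nz; rewrite /= /Phi' lam1; last lra.
rewrite mul1r subrr mul0r addr0 => nz.
by exists (r w); split => //; split => //; exact: rA.
Unshelve. all: by end_near.
Qed.

Lemma Phi'_nbhd (M : set Y) : open M -> exists M' : set Y,
  [/\ open M', M' `&` Yn p = M `&` Yn p &
    forall x, M `&` spt (Yn p) (Phi x) = set0 ->
              M' `&` spt (Yn p.+1) (Phi' x) = set0].
Proof.
move=> oM.
pose S := [set w | [/\ V w, M (r w) & sig w < 3%:R^-1]].
have oS : open (S : set (subspace (Yn p.+1))).
  apply: open_sub_crit => w Bw [Vw Mw sw].
  have e1 := evV w Vw Bw.
  have e2 := ev_map _ _ _ _ _ oV Vw Bw rc (open_nbhs_nbhs (conj oM Mw)).
  have e3 := ev_lt _ _ _ _ sc Bw sw.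
  near=> z; split; near: z; [exact: e1 | exact: e2 | exact: e3].
have [W oW WS] := (@open_subspaceP Y (Yn p.+1) S).1 oS.
exists W; split => //.
  apply/seteqP; split => z [Wz Az].
    have Bz := VB z (AV z Az).
    have : (W `&` Yn p.+1) z by [].
    by rewrite WS => -[[_ + _] _]; rewrite rid.
  have Bz := VB z (AV z Az).
  have : (S `&` Yn p.+1) z.
    split => //; split; [exact: AV | by rewrite rid | rewrite s0 //; lra].
  by rewrite -WS => -[].
move=> x h; apply: open_closure_disj => //.
apply/seteqP; split => // w [Ww [Bw nz]].
have : (W `&` Yn p.+1) w by [].
rewrite WS => -[[Vw Mw sw] _].
move: nz; rewrite /= /Phi' lam1; last lra.
rewrite mul1r subrr mul0r addr0 => nz.
have : (M `&` spt (Yn p) (Phi x)) (r w).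
  by split => //; apply: subset_closure; split => //; exact: rA.
by rewrite h.
Unshelve. all: by end_near.
Qed.

Lemma good' : Good p.+1 Phi'.
Proof.
split.
- exact: Phi'_cont.
- exact: Phi'_ge0.
- exact: Phi'_zero.
- exact: Phi'_lf.
- exact: Phi'_sum.
- exact: Phi'_spt.
Qed.

Lemma rel' : Rel p Phi Phi'.
Proof.
split.
- exact: Phi'_eq.
- exact: Phi'_sptA.
- exact: Phi'_nbhd.
Qed.

End Sig.

Lemma sig_ex (Hp : paracompact R (subspace (Yn p.+1))) :
  exists sig : Y -> R, [/\ {within Yn p.+1, continuous sig},
    (forall y, Yn p y -> sig y = 0) & (forall y, ~ O y -> sig y = 1)].
Proof.
pose Uc (b : bool) : set Y := if b then O else ~` Yn p.
have oU : forall b, open (Uc b : set (subspace (Yn p.+1))).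
  case; first exact: O2.
  by apply: open_subspaceW; rewrite openC; exact: Hclosed.
have cU : \bigcup_b Uc b = setT.
  apply/seteqP; split => // y _; case: (pselect (O y)) => Oy.
    by exists true.
  by exists false => //= Ay; apply: Oy; exact: O1.
have [I0 [f [fc fge lf fsum fsub]]] := Hp bool Uc oU cU.
have [jb Hjb] := choice fsub.
exists (fun y => \sum_(i \in [set i | jb i = false]) f i y); split.
- exact: (@lf_sum_cont R (subspace (Yn p.+1)) I0 f _ fc lf).
- move=> y Ay; apply: fsbig1 => i /= jbi; apply/eqP; apply: contraT => nz.
  have := Hjb i; rewrite jbi /= => sub.
  have : @fsupport R (subspace (Yn p.+1)) (f i) y.
    by apply: (@subset_closure (subspace (Yn p.+1))).
  by move=> /sub /(_ Ay).
- move=> y nO; rewrite -(fsum y); apply: fsbig_widen => // i [_ /= jbi].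
  rewrite /preimage /=; apply/eqP; apply: contraT => nz.
  have jt : jb i = true by case: (jb i) jbi.
  have := Hjb i; rewrite jt /= => sub.
  have : @fsupport R (subspace (Yn p.+1)) (f i) y.
    by apply: (@subset_closure (subspace (Yn p.+1))).
  by move=> /sub.
Qed.

Lemma step_core (Hp : paracompact R (subspace (Yn p.+1))) :
  exists Phi2, Good p.+1 Phi2 /\ Rel p Phi Phi2.
Proof.
have [sig [sc s0 sO]] := sig_ex Hp.
exists (Phi' sig); split.
- by apply: good'.
- by apply: rel'.
Qed.

End Step.

Lemma main_inner (Hincr : forall n, Yn n `<=` Yn n.+1)
  (Hcover : \bigcup_n Yn n = setT) (Hcolim : colimit_topology Yn)
  (Hpara : forall n, paracompact R (subspace (Yn n)))
  (Hretr : forall n, nbhd_retract (Yn n) (Yn n.+1)) :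
  exists (I : choiceType) (f : I -> Y -> R),
    lf_partition_of_unity_subordinate f U.
Proof.
have step p Phi : Good p Phi -> exists Phi2, Good p.+1 Phi2 /\ Rel p Phi Phi2.
  move=> HPhi; have [V [AV VB oV [r [rc rV rid]]]] := Hretr p.
  exact: (@step_core p Phi HPhi V r AV VB oV rc rV rid (Hpara p.+1)).
pose st p (s : {Phi | Good p Phi}) :
  {Phi2 | Good p.+1 Phi2 /\ Rel p (sval s) Phi2} :=
  cid (step p (sval s) (svalP s)).
pose seqs := fix seqs p : {Phi | Good p Phi} :=
  match p return {Phi | Good p Phi} with
  | 0 => exist _ (newf 0) good0
  | q.+1 => exist _ (sval (st q (seqs q))) (proj1 (svalP (st q (seqs q))))
  end.
apply: (@assemble Hincr Hcover Hcolim (fun p => sval (seqs p))).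
- by move=> p; exact: (svalP (seqs p)).
- by move=> p; exact: (proj2 (svalP (st p (seqs p)))).
Qed.

End Main.

End Aux.

Theorem lemmaA4 (R : realType) (Y : topologicalType) (Yn : nat -> set Y)
  (Hincr : forall n, Yn n `<=` Yn n.+1)
  (Hcover : \bigcup_n Yn n = setT)
  (Hcolim : colimit_topology Yn)
  (Hpara : forall n, paracompact R (subspace (Yn n)))
  (Hclosed : forall n, closed (Yn n))
  (Hretr : forall n, nbhd_retract (Yn n) (Yn n.+1))
  (Hdiff_para : forall n, paracompact R (subspace (Yn n.+1 `\` Yn n)))
  (Hdiff_haus : forall n, hausdorff_space (subspace (Yn n.+1 `\` Yn n))) :
  paracompact R Y.
Proof.
move=> J U Uo Ucov.
have Hk k : exists (I : choiceType) (f : I -> Y -> R),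
    @lf_partition_of_unity_subordinate R (subspace (Yn k)) I f J U.
  apply: Hpara => //; move=> j; exact: open_subspaceW.
pose Ik k := projT1 (cid (Hk k)).
have Hk2 k : exists f : Ik k -> Y -> R,
    @lf_partition_of_unity_subordinate R (subspace (Yn k)) (Ik k) f J U :=
  projT2 (cid (Hk k)).
pose chi k := projT1 (cid (Hk2 k)).
have Hchi k : @lf_partition_of_unity_subordinate R (subspace (Yn k)) (Ik k)
    (chi k) J U := projT2 (cid (Hk2 k)).
have Hj0 k (i : Ik k) : exists j, @fsupport R (subspace (Yn k)) (chi k i) `<=` U j.
  by have [_ _ _ _ h] := Hchi k; exact: h.
pose jchi k i := projT1 (cid (Hj0 k i)).
have Hj k i : @fsupport R (subspace (Yn k)) (chi k i) `<=` U (jchi k i) :=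
  projT2 (cid (Hj0 k i)).
exact: (@Aux.main_inner R Y Yn Hclosed J U Uo Ik chi jchi Hchi Hj Hincr Hcover
  Hcolim Hpara Hretr).
Qed.
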